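(* Let $D_{d,k}$ be a partial DCell, and let $\alpha'=\alpha_k\cdots\alpha_{l+2}$ with $3\le l+2\le k$. If $m$ is the largest integer such that $D_{d,l}^{\alpha'm}$ is non-empty, then $D_{d,l}^{\alpha'i}$ and $D_{d,l}^{\alpha'j}$ are linked for all $i,j$ with $0\le i<j<m$, and $D_{d,l}^{\alpha'm}$ is linked to at least $\min\{m,t_1\}$ of the sub-partial $DCell_l$s $D_{d,l}^{\alpha'i}$.
   Context: DCell with parameter $n\ge2$: $DCell_0=D_0=K_n$, $t_0=n$; for $j\ge1$, $D_j$ consists of $t_{j-1}+1$ vertex-disjoint copies $D_{j-1}^0,\dots,D_{j-1}^{t_{j-1}}$ of $D_{j-1}$ plus level $j$ edges, and $t_j=t_{j-1}(t_{j-1}+1)$ (so $t_1=n(n+1)$). A vertex of $D_k$ has label $(\alpha_k,\dots,\alpha_1,\alpha_0)$, where $\alpha_j\in\{0,\dots,t_{j-1}\}$ is the index of the copy of $D_{j-1}$ inside the containing $D_j$ and $\alpha_0\in\{0,\dots,n-1\}$; $uid_{j}=\alpha_0+\sum_{l=1}^{j}\alpha_l t_{l-1}$. For $a<b$, the vertex with $uid_{j-1}=b-1$ in $D_{j-1}^a$ is joined to the vertex with $uid_{j-1}=a$ in $D_{j-1}^b$. Enumeration: for $k\ge2$ put $a_i=t_{i-1}+1$ ($2\le i\le k$), $A=[a_k]\times\cdots\times[a_2]$ with $[a]=\{0,\dots,a-1\}$; $\alpha=\alpha_k\cdots\alpha_2\in A$ identifies the copy of $DCell_1$ consisting of the vertices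 with labels $(\alpha_k,\dots,\alpha_2,\cdot,\cdot)$. Prefixes of $\alpha$ are $\alpha_k\cdots\alpha_{l+1}$ ($2\le l+1\le k$), $\varnothing$ is the empty prefix, and $\beta i$ denotes appending $i$. An array $\phi:A\to\{0,1\}$ starts at $0$; a tuple $\beta$ is non-empty if some $\alpha$ with prefix (or equal to) $\beta$ has $\phi(\alpha)=1$, empty otherwise, full if all such $\alpha$ have $\phi(\alpha)=1$. Next$(\beta)$, $\beta=\alpha_k\cdots\alpha_{l+1}$ ($l=k$ if $\beta=\varnothing$): let $m$ be the least $i$ with $\beta i$ empty; if $l=2$ set $\phi(\beta m):=1$ and stop; otherwise if $m\ge a_2$ replace $m$ by the least $i$ with $\beta i$ not full; then call Next$(\beta m)$. The partial DCell $D_{d,k}$ is the subgraph of $DCell_k$ induced by the vertices of the $DCell_1$s $\alpha$ with $\phi(\alpha)=1$ after $d$ calls of Next$(\varnothing)$. For a tuple $\beta=\alpha_k\cdots\alpha_{l+1}$, the sub-partial $DCell_l$ $D_{d,l}^{\beta}$ is the subgraph of $D_{d,k}$ induced by its vertices whose labels begin with $\beta$ (possibly empty). Two such subgraphs are linked if some edge of $D_{d,k}$ joins a vertex of one to a vertex of the other. *)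

(* Defs.v *)
From mathcomp Require Import all_boot.
Set Implicit Arguments. Unset Strict Implicit. Unset Printing Implicit Defensive.

Definition t (n j : nat) : nat := iter j (fun x => x * x.+1) n.

(* a_i = t_{i-1} + 1 (range size of alpha_i, i >= 1) *)
Definition a (n i : nat) : nat := (t n i.-1).+1.

(* A vertex of D_k is a label (alpha_k, ..., alpha_1, alpha_0), represented
   big-endian as a seq nat of size k+1; [alpha k v j] is alpha_j. *)
Definition alpha (k : nat) (v : seq nat) (j : nat) : nat := nth 0 v (k - j).

Definition is_vertex (n k : nat) (v : seq nat) : Prop :=
  [/\ size v = k.+1, alpha k v 0 < n &
      forall j, 1 <= j <= k -> alpha k v j <= t n j.-1].

Definition uid (n k : nat) (v : seq nat) (j : nat) : nat :=
  alpha k v 0 + \sum_(1 <= l < j.+1) alpha k v l * t n l.-1.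

(* Level-j edge (0 <= j <= k) between u and v in DCell_k:
   they agree on alpha_k..alpha_{j+1}; for j = 0 they differ in alpha_0
   (the complete graph K_n = D_0); for j >= 1, with a = alpha_j(u) < b =
   alpha_j(v), uid_{j-1}(u) = b-1 and uid_{j-1}(v) = a. *)
Definition level_edge (n k j : nat) (u v : seq nat) : Prop :=
  (forall p, j < p <= k -> alpha k u p = alpha k v p) /\
  (if j == 0 then alpha k u 0 <> alpha k v 0
   else alpha k u j < alpha k v j /\
        uid n k u j.-1 = (alpha k v j).-1 /\ uid n k v j.-1 = alpha k u j).

Definition dcell_adj (n k : nat) (u v : seq nat) : Prop :=
  is_vertex n k u /\ is_vertex n k v /\
  exists j, j <= k /\ (level_edge n k j u v \/ level_edge n k j v u).

(* Tuples alpha_k ... alpha_2 are seq nat (big-endian).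
   [completions n l] lists all suffixes alpha_l ... alpha_2 with
   alpha_j < a_j (for l <= 1 the only suffix is the empty one). *)
Fixpoint completions (n l : nat) : seq (seq nat) :=
  match l with
  | 0 => [:: [::]]
  | l'.+1 => if l' is 0 then [:: [::]]
             else [seq x :: c | x <- iota 0 (a n l), c <- completions n l']
  end.

(* The array phi : A -> {0,1} is represented by the list of the alpha's
   with phi(alpha) = 1. For a tuple gamma = alpha_k .. alpha_j: *)
Definition tuple_nonempty (n : nat) (phi : seq (seq nat)) (gamma : seq nat)
    (j : nat) : bool :=
  has (fun c => (gamma ++ c) \in phi) (completions n j.-1).

Definition tuple_full (n : nat) (phi : seq (seq nat)) (gamma : seq nat)
    (j : nat) : bool :=
  all (fun c => (gamma ++ c) \in phi) (completions n j.-1).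

(* Next(beta) for beta = alpha_k .. alpha_{l+1} (beta i has its last entry at
   level l).  The least i with beta i empty is searched among i < a_l (for
   i >= a_l, beta i is vacuously empty, so the result a_l means "none in
   range"); similarly for "not full".  When no admissible index remains in
   range (the whole structure below beta is full) the call does nothing. *)
Fixpoint next (n l : nat) (beta : seq nat) (phi : seq (seq nat))
    : seq (seq nat) :=
  match l with
  | 0 => phi
  | l'.+1 =>
    let m := find (fun i => ~~ tuple_nonempty n phi (rcons beta i) l)
                  (iota 0 (a n l)) in
    if l == 2 then (if m < a n 2 then rcons beta m :: phi else phi)
    else
      let m' := if m < a n 2 then m
                else find (fun i => ~~ tuple_full n phi (rcons beta i) l)
                          (iota 0 (a n l)) in
      if m' < a n l then next n l' (rcons beta m') phi else phi
  end.

Definition phi_d (n k d : nat) : seq (seq nat) :=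
  iter d (next n k [::]) [::].

(* Vertices of the partial DCell D_{d,k}: vertices of DCell_k lying in a
   DCell_1 alpha = alpha_k .. alpha_2 with phi(alpha) = 1. *)
Definition in_partial (n k d : nat) (v : seq nat) : Prop :=
  is_vertex n k v /\ take k.-1 v \in phi_d n k d.

Definition in_sub (n k d : nat) (beta v : seq nat) : Prop :=
  in_partial n k d v /\ take (size beta) v = beta.

Definition sub_nonempty (n k d : nat) (beta : seq nat) : Prop :=
  exists v, in_sub n k d beta v.

Definition linked (n k d : nat) (beta1 beta2 : seq nat) : Prop :=
  exists u v, [/\ in_sub n k d beta1 u, in_sub n k d beta2 v &
                  dcell_adj n k u v].

(* Main.v *)
Require Import Defs.
From mathcomp Require Import all_boot.
From mathcomp Require Import zify.
Set Implicit Arguments. Unset Strict Implicit. Unset Printing Implicit Defensive.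

Lemma tS n j : t n j.+1 = t n j * (t n j).+1.
Proof. by []. Qed.

Lemma t_gt0 n j : 0 < n -> 0 < t n j.
Proof. move=> hn; elim: j => [|j IH] //; rewrite tS; nia. Qed.

Lemma t_mono n i j : 0 < n -> i <= j -> t n i <= t n j.
Proof.
move=> hn; elim: j => [|j IH] hij; first by rewrite leqn0 in hij; move/eqP: hij ->.
case: (ltngtP i j.+1) hij => // [hl|->] _; last by [].
apply: leq_trans (IH hl) _; rewrite tS; have := t_gt0 j hn; nia.
Qed.

Lemma completionsSS n L :
  completions n L.+2 = [seq x :: c | x <- iota 0 (a n L.+2), c <- completions n L.+1].
Proof. by []. Qed.

Lemma mem_completions n L c :
  c \in completions n L <-> size c = L.-1 /\ forall q, q < L.-1 -> nth 0 c q < a n (L - q).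
Proof.
elim: L c => [|L IH] c.
  rewrite /= inE; split; first by move/eqP->.
  by case: c => [|x c] [] //.
case: L IH => [|L] IH.
  rewrite /= inE; split; first by move/eqP->.
  by case: c => [|x c] [] //.
rewrite completionsSS; split.
  case/allpairsPdep => [x [c' [hx hc ->]]]; have [h1 h2] := (IH c').1 hc.
  split; first by rewrite /= h1.
  move=> [|q] hq /=; first by rewrite mem_iota in hx; rewrite subn0; lia.
  by have := h2 q (ltac:(lia)); rewrite subSS.
case: c => [|x c] [hs hq]; first by [].
apply/allpairsPdep; exists x, c; split => //.
  rewrite mem_iota /=; have := hq 0 (ltac:(lia)); rewrite subn0 /=. by rewrite add0n.
apply/IH; split; first by move: hs => /= [->].
move=> q hq'; have := hq q.+1 (ltac:(lia)); by rewrite /= subSS.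
Qed.
Definition NE (phi : seq (seq nat)) (g : seq nat) : bool :=
  has (fun y => take (size g) y == g) phi.
Definition validt n k (y : seq nat) :=
  size y = k.-1 /\ forall q, q < k.-1 -> nth 0 y q < a n (k - q).
Definition FULL n k (phi : seq (seq nat)) (g : seq nat) :=
  forall y, validt n k y -> take (size g) y = g -> y \in phi.
Definition ChoiceOK n k phi g c :=
  [/\ c < a n (k - size g),
      (~~ NE phi (rcons g c) -> (forall i, i < c -> NE phi (rcons g i)) /\
         (a n 2 <= c -> forall i, i < c -> FULL n k phi (rcons g i)))
    & (~~ NE phi g -> c = 0)].

Lemma NE_prefix phi g g' : NE phi g' -> size g <= size g' -> take (size g) g' = g -> NE phi g.
Proof.
move=> /hasP [y hy /eqP hyg] hs hg; apply/hasP; exists y => //.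
by apply/eqP; rewrite -{2}hg -hyg take_takel.
Qed.

Lemma NE_rcons phi g i : NE phi (rcons g i) -> NE phi g.
Proof.
move=> h; apply: NE_prefix h _ _; first by rewrite size_rcons.
by rewrite -cats1 take_size_cat.
Qed.

Lemma tne_NE n phi g j : tuple_nonempty n phi g j -> NE phi g.
Proof.
move=> /hasP [c _ hc]; apply/hasP; exists (g ++ c) => //.
by rewrite take_size_cat.
Qed.

Lemma tfull_FULL n k phi g j : size g + j = k.+1 -> 2 <= j ->
  tuple_full n phi g j -> FULL n k phi g.
Proof.
move=> hs hj /allP hf; rewrite /FULL => y [hy1 hy2] hyg.
rewrite -(cat_take_drop (size g) y) hyg; apply: hf.
apply/mem_completions; split; first by rewrite size_drop hy1; lia.
move=> q hq; rewrite nth_drop; have := hy2 (size g + q) (ltac:(lia)).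
by have -> : k - (size g + q) = j.-1 - q by lia.
Qed.

Lemma FULL_NE n k phi g : size g <= k.-1 ->
  (forall q, q < size g -> nth 0 g q < a n (k - q)) -> FULL n k phi g -> NE phi g.
Proof.
move=> hs hg hf; apply/hasP; exists (g ++ nseq (k.-1 - size g) 0).
  apply: hf; last by rewrite take_size_cat.
  split; first by rewrite size_cat size_nseq; lia.
  move=> q hq; rewrite nth_cat; case: ifP => hq'; first exact: hg.
  by rewrite nth_nseq; case: ifP.
by rewrite take_size_cat.
Qed.

Lemma next_S n l beta phi : Defs.next n l.+1 beta phi =
    let m := find (fun i => ~~ tuple_nonempty n phi (rcons beta i) l.+1)
                  (iota 0 (a n l.+1)) in
    if l.+1 == 2 then (if m < a n 2 then rcons beta m :: phi else phi)
    else
      let m' := if m < a n 2 then m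
                else find (fun i => ~~ tuple_full n phi (rcons beta i) l.+1)
                          (iota 0 (a n l.+1)) in
      if m' < a n l.+1 then Defs.next n l (rcons beta m') phi else phi.
Proof. by []. Qed.

Lemma choice_ok n k phi beta m c : size beta < k.-1 ->
  (forall q, q < size beta -> nth 0 beta q < a n (k - q)) ->
  (forall i, i < m -> NE phi (rcons beta i)) ->
  c < a n (k - size beta) ->
  ((c = m /\ m < a n 2) \/ (a n 2 <= m /\ (forall i, i < c -> FULL n k phi (rcons beta i)))) ->
  ChoiceOK n k phi beta c.
Proof.
move=> hs hb hm hc hcase; split => //.
  move=> _; case: hcase => [[-> h2] | [h2 hf]]; split => //.
  - by move=> h; move: (leq_trans h h2); rewrite ltnn.
  - move=> i hi; apply: (@FULL_NE n k phi (rcons beta i) _ _ (hf i hi)); first by rewrite size_rcons.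
    move=> q; rewrite size_rcons ltnS leq_eqVlt nth_rcons => /orP [/eqP ->|hq].
      by rewrite ltnn eqxx; apply: leq_trans hi (ltnW hc).
    by rewrite hq; apply: hb.
move=> hne; case: hcase => [[-> _] | [h2 _]].
  by case: m hm => // m hm; case/negP: hne; apply: (@NE_rcons _ _ 0); apply: hm.
by case/negP: hne; apply: (@NE_rcons _ _ 0); apply: hm; apply: leq_trans h2.
Qed.

Lemma next_spec n k l beta phi : 0 < n -> 2 <= l -> l <= k -> size beta = k - l ->
  (forall q, q < size beta -> nth 0 beta q < a n (k - q)) ->
  Defs.next n l beta phi = phi \/ exists x, [/\ Defs.next n l beta phi = x :: phi,
     size x = k.-1, take (k - l) x = beta &
     forall p, k - l <= p < k.-1 -> ChoiceOK n k phi (take p x) (nth 0 x p)].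
Proof.
elim: l beta => [|l IH] beta hn hl hlk hsb hb; first by [].
rewrite next_S; cbv zeta.
set A := a n l.+1.
set m := find (fun i => ~~ tuple_nonempty n phi (rcons beta i) l.+1) (iota 0 A).
have hA : A = a n (k - size beta) by rewrite hsb /A; congr (a n _); lia.
have hmA : m <= A by rewrite /m -{2}(size_iota 0 A) find_size.
have hbef : forall i, i < m -> NE phi (rcons beta i).
  move=> i hi; have := before_find 0 hi; rewrite nth_iota; last by apply: leq_trans hi hmA.
  by rewrite add0n => /negbFE; apply: tne_NE.
have hsk : size beta < k.-1 by rewrite hsb; lia.
case: ifP => hl2.
  case: ifP => hm2; last by left.
  right; exists (rcons beta m); split => //.
  - by rewrite size_rcons hsb; move/eqP: hl2 => [->]; lia.
  - by rewrite -cats1 take_size_cat // hsb.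
  move=> p /andP [h1 h2]; have hp : p = size beta by move/eqP: hl2 => [hl']; rewrite hsb; lia.
  rewrite hp -cats1 take_size_cat // nth_cat ltnn subnn /=.
  apply: (choice_ok hsk hb hbef); last by left.
  by rewrite -hA; move/eqP: hl2 => [hl']; rewrite /A hl'.
set m' := if m < a n 2 then m else _.
case: ifP => hm'; last by left.
have hl2' : 2 <= l by move/negbT: hl2; move: hl; rewrite eqSS; lia.
have hok : ChoiceOK n k phi beta m'.
  apply: (choice_ok hsk hb hbef); first by rewrite -hA.
  rewrite /m'; case: ifP => hm2; first by left.
  right; split; first by rewrite leqNgt hm2.
  move=> i hi; have hiA : i < A by move: hm'; rewrite /m' hm2 => hm'; apply: leq_trans hi (ltnW hm').
  have := before_find 0 hi; rewrite nth_iota // add0n => /negbFE.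
  apply: tfull_FULL => //; rewrite size_rcons hsb; lia.
have hS : size (rcons beta m') = k - l by rewrite size_rcons hsb; lia.
have hB : forall q, q < size (rcons beta m') -> nth 0 (rcons beta m') q < a n (k - q).
  move=> q; rewrite size_rcons ltnS leq_eqVlt nth_rcons => /orP [/eqP ->|hq].
    by rewrite ltnn eqxx -hA.
  by rewrite hq; apply: hb.
case: (IH (rcons beta m') hn hl2' (ltnW hlk) hS hB) => [-> | [x [hx hs ht hp]]]; first by left.
have hkl : k - l.+1 <= k - l by lia.
have htb : take (k - l.+1) x = beta.
  by rewrite -(take_takel x hkl) ht -hsb -cats1 take_size_cat.
right; exists x; split => //.
move=> p /andP [h1 h2]; case: (ltngtP p (k - l.+1)) => hpk.
- by move: h1; rewrite leqNgt hpk.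
- apply: hp; rewrite h2 andbT; lia.
rewrite hpk htb -(nth_take 0 (_ : k - l.+1 < k - l)) ?ht; last by lia.
by rewrite nth_rcons hsb ltnn eqxx.
Qed.

Definition INV n k phi :=
  [/\ (forall g i j, i < j -> NE phi (rcons g j) -> NE phi (rcons g i)),
      (forall g i j, i < j -> a n 2 <= j -> NE phi (rcons g j) -> FULL n k phi (rcons g i))
    & (forall g, NE phi g -> g ++ nseq (k.-1 - size g) 0 \in phi)].

Lemma NE_cons phi x g : NE (x :: phi) g = (take (size g) x == g) || NE phi g.
Proof. by []. Qed.

Lemma FULL_cons n k phi x g : FULL n k phi g -> FULL n k (x :: phi) g.
Proof. by move=> h y hy hg; rewrite inE (h y hy hg) orbT. Qed.

Lemma take_rcons_inv (x g : seq nat) j K : take (size g).+1 x = rcons g j -> size x = K ->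
  [/\ size g < K, take (size g) x = g & nth 0 x (size g) = j].
Proof.
move=> h hs.
have hsz : size g < K.
  have := congr1 size h; rewrite size_take size_rcons hs.
  by case: ifP => [hlt _ | _ ->] //; apply: ltnW.
split => //.
  by rewrite -(take_takel x (leqnSn (size g))) h -cats1 take_size_cat.
by rewrite -(nth_take 0 (ltnSn (size g))) h nth_rcons ltnn eqxx.
Qed.

Lemma INV_add n k phi x : INV n k phi -> size x = k.-1 ->
  (forall p, p < k.-1 -> ChoiceOK n k phi (take p x) (nth 0 x p)) -> INV n k (x :: phi).
Proof.
move=> [I1 I2 I3] hsx hc; split.
- move=> g i j hij; rewrite !NE_cons size_rcons => /orP [/eqP h | h]; last first.
    by rewrite (I1 g i j hij h) orbT.
  case hne: (NE phi (rcons g j)); first by rewrite (I1 g i j hij hne) orbT.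
  have [hs ht hn] := take_rcons_inv h hsx.
  have [_ hc2 _] := hc _ hs; rewrite ht hn in hc2; have [h1 _] := hc2 (negbT hne).
  by rewrite h1 ?orbT.
- move=> g i j hij hj; rewrite !NE_cons size_rcons => /orP [/eqP h | h]; last first.
    by apply: FULL_cons; apply: (I2 g i j).
  case hne: (NE phi (rcons g j)); first by apply: FULL_cons; apply: (I2 g i j).
  have [hs ht hn] := take_rcons_inv h hsx.
  have [_ hc2 _] := hc _ hs; rewrite ht hn in hc2; have [_ h2] := hc2 (negbT hne).
  by apply: FULL_cons; apply: h2.
move=> g; rewrite NE_cons => /orP [/eqP h | h]; last by rewrite inE (I3 g h) orbT.
case hne: (NE phi g); first by rewrite inE (I3 g hne) orbT.
have hsg : size g <= k.-1 by rewrite -hsx -h size_take_min geq_minr.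
suff -> : g ++ nseq (k.-1 - size g) 0 = x by apply: mem_head.
rewrite -[RHS](cat_take_drop (size g) x) h; congr (_ ++ _).
apply: (@eq_from_nth _ 0); first by rewrite size_nseq size_drop hsx.
move=> q; rewrite size_nseq => hq; rewrite nth_nseq hq nth_drop.
have hp : size g + q < k.-1 by lia.
have [_ _ h3] := hc _ hp; symmetry; apply: h3; apply/negP => hN.
move/negP: hne; apply; apply: (NE_prefix hN).
  by rewrite size_takel ?hsx; lia.
by rewrite take_takel ?leq_addr // h.
Qed.

Lemma INV_phi_d n k d : 0 < n -> 2 <= k -> INV n k (phi_d n k d).
Proof.
move=> hn hk; elim: d => [|d IH].
  by split => // g; rewrite /NE /=.
rewrite /phi_d iterS -/(phi_d n k d).
have := @next_spec n k k [::] (phi_d n k d) hn hk (leqnn k).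
rewrite subnn => /(_ erefl) []; first by move=> q.
  by move=> ->.
move=> [x [-> hs _ hp]]; apply: INV_add => // p hp'; apply: hp; by rewrite hp'.
Qed.

Fixpoint digits n L u : seq nat :=
  match L with 0 => [:: u] | L'.+1 => u %/ t n L' :: digits n L' (u %% t n L') end.

Lemma size_digits n L u : size (digits n L u) = L.+1.
Proof. by elim: L u => [|L IH] u //=; rewrite IH. Qed.

Lemma digits_last n L u : 0 < n -> u < t n L -> nth 0 (digits n L u) L < n.
Proof.
move=> hn; elim: L u => [|L IH] u //= hu.
by apply: IH; rewrite ltn_pmod // t_gt0.
Qed.

Lemma digits_bound n L u : 0 < n -> u < t n L ->
  forall j, 1 <= j <= L -> nth 0 (digits n L u) (L - j) <= t n j.-1.
Proof.
move=> hn; elim: L u => [|L IH] u hu j /andP [hj1 hjL]; first by lia.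
have ht := t_gt0 L hn.
case: (ltngtP j L.+1) hjL => // [hjl|->] _.
  rewrite /= (_ : L.+1 - j = (L - j).+1) /=; last by lia.
  by apply: IH; [rewrite ltn_pmod | rewrite hj1 -ltnS].
rewrite subnn /= -ltnS ltn_divLR //; move: hu; rewrite tS; lia.
Qed.

Lemma digits_val n L u :
  nth 0 (digits n L u) L + \sum_(1 <= q < L.+1) nth 0 (digits n L u) (L - q) * t n q.-1 = u.
Proof.
elim: L u => [|L IH] u; first by rewrite big_geq // addn0.
rewrite big_nat_recr //= subnn /=.
rewrite (@eq_big_nat _ _ _ 1 L.+1 _ (fun q => nth 0 (digits n L (u %% t n L)) (L - q) * t n q.-1)).
  by rewrite addnA IH addnC -divn_eq.
by move=> q /andP [h1 h2]; rewrite (_ : L.+1 - q = (L - q).+1) //; lia.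
Qed.

Lemma digits_small n L u : 0 < n -> u < t n 1 -> 1 <= L ->
  take L.-1 (digits n L u) = nseq L.-1 0.
Proof.
move=> hn hu; elim: L => [|L IH] // _.
case: L IH => [|L] IH //.
have hle : t n 1 <= t n L.+1 by apply: t_mono.
have hlt : u < t n L.+1 by apply: leq_trans hu hle.
rewrite [digits _ _ _]/= divn_small // [u %% _]modn_small //.
by move: IH => /= ->.
Qed.

Definition mkv n (al : seq nat) c L u := al ++ c :: digits n L u.

Lemma alpha_mkv n k l al c u j : size al = k - l.+1 -> l.+1 <= k -> j <= k ->
  alpha k (mkv n al c l u) j =
  if j <= l then nth 0 (digits n l u) (l - j) else if j == l.+1 then c else nth 0 al (k - j).
Proof.
move=> hs hk hj; rewrite /alpha /mkv nth_cat hs.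
case: (leqP j l) => h1.
  rewrite (_ : (k - j < k - l.+1) = false); last by apply/negbTE; rewrite -leqNgt; lia.
  rewrite (_ : k - j - (k - l.+1) = (l - j).+1) //; lia.
case: eqP => h2.
  rewrite (_ : (k - j < k - l.+1) = false); last by apply/negbTE; rewrite -leqNgt; lia.
  by rewrite (_ : k - j - (k - l.+1) = 0) //; rewrite h2; lia.
by rewrite (_ : (k - j < k - l.+1) = true) //; apply/idP; lia.
Qed.

Lemma is_vertex_mkv n k l al c u : 0 < n -> size al = k - l.+1 -> l.+1 <= k ->
  (forall p, p < size al -> nth 0 al p < a n (k - p)) -> c <= t n l -> u < t n l ->
  is_vertex n k (mkv n al c l u).
Proof.
move=> hn hs hk hal hc hu; split.
- by rewrite /mkv size_cat /= size_digits hs; lia.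
- by rewrite alpha_mkv // ?leq0n // subn0; apply: digits_last.
move=> j /andP [hj1 hjk]; rewrite alpha_mkv //.
case: ifP => h1; first by apply: digits_bound => //; rewrite hj1.
case: ifP => h2; first by move/eqP: h2 => ->.
have := hal (k - j) (ltac:(lia)); rewrite /a (_ : k - (k - j) = j) //; lia.
Qed.

Lemma uid_mkv n k l al c u : size al = k - l.+1 -> l.+1 <= k ->
  uid n k (mkv n al c l u) l = u.
Proof.
move=> hs hk; rewrite /uid alpha_mkv // ?leq0n // subn0.
rewrite -[RHS](digits_val n l u); congr (_ + _).
apply: eq_big_nat => q /andP [h1 h2]; rewrite alpha_mkv //; last by lia.
by rewrite (_ : q <= l = true) //; lia.
Qed.

Lemma take_mkv1 n k l al c u : size al = k - l.+1 -> l.+1 <= k ->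
  take (size (rcons al c)) (mkv n al c l u) = rcons al c.
Proof.
move=> hs hk; rewrite size_rcons /mkv -cat1s catA take_size_cat ?cats1 //.
by rewrite size_rcons.
Qed.

Lemma take_mkv2 n k l al c u : size al = k - l.+1 -> 1 <= l -> l.+1 <= k ->
  take k.-1 (mkv n al c l u) = al ++ c :: take l.-1 (digits n l u).
Proof.
move=> hs hl hk; rewrite /mkv take_cat hs.
have -> : (k.-1 < k - l.+1) = false by lia.
by rewrite (_ : k.-1 - (k - l.+1) = l.-1.+1) //; lia.
Qed.

Lemma validt_take n k v : is_vertex n k v -> validt n k (take k.-1 v).
Proof.
move=> [hs h0 hj]; split; first by rewrite size_takel // hs; lia.
move=> q hq; rewrite nth_take //.
have := hj (k - q) (ltac:(lia)); rewrite /alpha /a (_ : k - (k - q) = q); last by lia.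
by rewrite ltnS.
Qed.

Lemma present n k d al c l u : 0 < n -> 1 <= l -> l.+1 <= k -> size al = k - l.+1 ->
  (forall p, p < size al -> nth 0 al p < a n (k - p)) -> c <= t n l -> u < t n l ->
  INV n k (phi_d n k d) ->
  (FULL n k (phi_d n k d) (rcons al c) \/ (u < t n 1 /\ NE (phi_d n k d) (rcons al c))) ->
  in_sub n k d (rcons al c) (mkv n al c l u).
Proof.
move=> hn hl hk hs hal hc hu [_ _ I3] hP.
have hv := is_vertex_mkv hn hs hk hal hc hu.
split; last exact: (@take_mkv1 n k l al c u hs hk).
split => //.
case: hP => [hF | [hu1 hN]].
  apply: hF; first exact: validt_take.
  have := @take_mkv1 n k l al c u hs hk; rewrite size_rcons => h.
  by rewrite take_takel; [exact h | lia].
have := I3 _ hN; rewrite (@take_mkv2 n k l al c u hs hl hk) digits_small // size_rcons cat_rcons.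
by rewrite (_ : k.-1 - (size al).+1 = l.-1) //; lia.
Qed.

Lemma link n k d al l i j : 0 < n -> 1 <= l -> l.+1 <= k -> size al = k - l.+1 ->
  (forall p, p < size al -> nth 0 al p < a n (k - p)) -> i < j -> j <= t n l ->
  INV n k (phi_d n k d) ->
  (FULL n k (phi_d n k d) (rcons al i) \/ (j.-1 < t n 1 /\ NE (phi_d n k d) (rcons al i))) ->
  (FULL n k (phi_d n k d) (rcons al j) \/ (i < t n 1 /\ NE (phi_d n k d) (rcons al j))) ->
  linked n k d (rcons al i) (rcons al j) /\ linked n k d (rcons al j) (rcons al i).
Proof.
move=> hn hl hk' hs hal hij hj hI hPi hPj.
have hu := @present n k d al i l j.-1 hn hl hk' hs hal (ltnW (leq_trans hij hj)) (ltac:(lia)) hI hPi.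
have hv := @present n k d al j l i hn hl hk' hs hal hj (ltac:(lia)) hI hPj.
set u := mkv n al i l j.-1 in hu *; set v := mkv n al j l i in hv *.
have hiu : is_vertex n k u by case: hu => [[]].
have hiv : is_vertex n k v by case: hv => [[]].
have he : level_edge n k l.+1 u v.
  split.
    move=> p /andP [h1 h2]; rewrite /u /v (@alpha_mkv n k l al i j.-1 p hs hk' h2) (@alpha_mkv n k l al j i p hs hk' h2).
    have -> : (p <= l) = false by apply/negbTE; rewrite -ltnNge; apply: ltnW.
    by rewrite (_ : (p == l.+1) = false) //; apply/negbTE; rewrite neq_ltn h1 orbT.
  rewrite /u /v /= (@alpha_mkv n k l al i j.-1 l.+1 hs hk' hk') (@alpha_mkv n k l al j i l.+1 hs hk' hk').
  rewrite ltnn eqxx (@uid_mkv n k l al i j.-1 hs hk') (@uid_mkv n k l al j i hs hk').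
  by [].
have hsy : forall x y, level_edge n k l.+1 x y -> is_vertex n k x -> is_vertex n k y ->
  dcell_adj n k x y /\ dcell_adj n k y x.
  move=> x y h hx hy; split; split => //; split => //; exists l.+1; split => //; by [left|right].
have [h1 h2] := hsy u v he hiu hiv.
by split; [exists u, v | exists v, u].
Qed.

Theorem lemma8 (n k d l m : nat) (alpha' : seq nat) :
  2 <= n ->
  1 <= l -> l.+2 <= k ->
  (* alpha' = alpha_k ... alpha_{l+2}, with alpha_j in [a_j] *)
  size alpha' = k - l.+1 ->
  (forall p, p < size alpha' -> nth 0 alpha' p < a n (k - p)) ->
  (* m is the largest integer with D_{d,l}^{alpha' m} non-empty *)
  sub_nonempty n k d (rcons alpha' m) ->
  (forall m', m < m' -> ~ sub_nonempty n k d (rcons alpha' m')) ->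
  (forall i j, i < j < m -> linked n k d (rcons alpha' i) (rcons alpha' j)) /\
  (exists s : seq nat,
      [/\ uniq s, minn m (t n 1) <= size s &
          forall i, i \in s -> i < m /\ linked n k d (rcons alpha' m) (rcons alpha' i)]).
Proof.
move=> hn2 hl hk hs hal [v0 [[hv0 hin] htv]] _.
have hn : 0 < n by lia.
have hk' : l.+1 <= k by lia.
have hI := @INV_phi_d n k d hn (ltac:(lia)).
have [I1 I2 _] := hI.
set phi := phi_d n k d in hI I1 I2 hin.
have hNm : NE phi (rcons alpha' m).
  apply/hasP; exists (take k.-1 v0) => //; apply/eqP.
  by rewrite take_takel // size_rcons hs; lia.
have hmt : m <= t n l.
  case: hv0 => hsv _ hj; have := hj l.+1 (ltac:(lia)).
  rewrite /alpha -(nth_take 0 (_ : k - l.+1 < (size alpha').+1)); last by rewrite hs; lia.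
  by rewrite size_rcons in htv; rewrite hs -hs htv nth_rcons ltnn eqxx.
split.
  move=> i j /andP [hij hjm].
  apply: (proj1 (@link n k d alpha' l i j hn hl hk' hs hal hij (ltac:(lia)) hI _ _)).
  - case: (ltnP (t n 1) m) => h.
      by left; apply: (I2 _ _ m) => //; lia.
    by right; split; [lia | apply: (I1 _ _ m) => //; lia].
  - case: (ltnP (t n 1) m) => h.
      by left; apply: (I2 _ _ m) => //; lia.
    by right; split; [lia | apply: (I1 _ _ m) => //; lia].
exists (iota 0 (minn m (t n 1))); split; first exact: iota_uniq.
  by rewrite size_iota.
move=> i; rewrite mem_iota add0n /= => hi.
have him : i < m by move: hi; rewrite leq_min; case/andP.
have hit : i < t n 1 by move: hi; rewrite leq_min; case/andP.
split => //.
apply: (proj2 (@link n k d alpha' l i m hn hl hk' hs hal him hmt hI _ _)).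
- case: (ltnP (t n 1) m) => h.
    by left; apply: (I2 _ _ m) => //; lia.
  by right; split; [lia | apply: (I1 _ _ m) => //; lia].
by right.
Qed.
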